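(* Let $a\in\mathbb{R}^n$. The maximal number of pairwise incomparable (with respect to inclusion) half-spaces of $\mathbb{R}_{\max}^n$ with apex $-a$ is $\binom{n}{\lfloor n/2\rfloor}$.
   Context: $\mathbb{R}_{\max}=\mathbb{R}\cup\{-\infty\}$ with $a\oplus b=\max(a,b)$, $ab=a+b$. A half-space with apex $-a$ (where $a\in\mathbb{R}^n$) is a set of the form $\{x\in\mathbb{R}_{\max}^n:\bigoplus_{i\in I}a_ix_i\le\bigoplus_{j\in J}a_jx_j\}$ where $I,J$ are disjoint sets with $I\cup J=\{1,\dots,n\}$. *)

(* Defs.v *)
From HB Require Import structures.
From mathcomp Require Import all_boot all_order all_algebra.
From mathcomp Require Import reals.
Set Implicit Arguments. Unset Strict Implicit. Unset Printing Implicit Defensive.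
Import Order.TTheory GRing.Theory Num.Theory.
Local Open Scope ring_scope.

(* The max-plus semiring R_max = R ∪ {-oo}: None stands for -oo. *)
Definition Rmax (R : realType) := option R.

Definition tadd (R : realType) (x y : Rmax R) : Rmax R :=
  match x, y with
  | None, _ => y
  | _, None => x
  | Some u, Some v => Some (Num.max u v)
  end.

Definition tmul (R : realType) (x y : Rmax R) : Rmax R :=
  match x, y with
  | Some u, Some v => Some (u + v)
  | _, _ => None
  end.

Definition tle (R : realType) (x y : Rmax R) : bool :=
  match x, y with
  | None, _ => true
  | Some _, None => false
  | Some u, Some v => u <= v
  end.

Definition tsum (R : realType) (n : nat) (a : 'I_n -> R) (I : {set 'I_n})
  (x : 'I_n -> Rmax R) : Rmax R :=
  \big[@tadd R/None]_(i in I) tmul (Some (a i)) (x i).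

(* The half-space with apex -a associated to the partition (I, J) of
   {1..n}, J being the complement of I:
   { x in R_max^n : ⊕_{i in I} a_i x_i <= ⊕_{j in J} a_j x_j }. *)
Definition halfspace (R : realType) (n : nat) (a : 'I_n -> R) (I : {set 'I_n})
  : (('I_n -> Rmax R) -> Prop) :=
  fun x => tle (tsum a I x) (tsum a (~: I) x).

Definition subset_of (R : realType) (n : nat) (A B : ('I_n -> Rmax R) -> Prop) :=
  forall x, A x -> B x.

(* Main.v *)
Require Import Defs.
From HB Require Import structures.
From mathcomp Require Import all_boot all_order all_algebra.
From mathcomp Require Import reals.
Set Implicit Arguments. Unset Strict Implicit. Unset Printing Implicit Defensive.
Import Order.TTheory GRing.Theory Num.Theory.
From mathcomp Require Import zify.

Lemma lym (T : finType) (S : {set T}) (F : {set {set T}}) :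
  (forall A, A \in F -> A \subset S) ->
  (forall A B, A \in F -> B \in F -> A \subset B -> A = B) ->
  \sum_(A in F) #|A|`! * (#|S| - #|A|)`! <= #|S|`!.
Proof.
have [N leN] := ubnP #|S|; elim: N S F leN => // N IH S F leN sub anti.
case: (boolP (S \in F)) => SF.
  have -> : F = [set S].
    apply/setP => A; rewrite in_set1; apply/idP/eqP => [AF|->//].
    exact: anti _ _ AF SF (sub _ AF).
  by rewrite big_set1 subnn fact0 muln1.
pose h (A : {set T}) := #|A|`! * (#|S|.-1 - #|A|)`!.
have step A : A \in F -> #|A|`! * (#|S| - #|A|)`! =
     \sum_(x in S) (if x \notin A then h A else 0).
  move=> AF; rewrite -big_mkcondr.
  rewrite (eq_bigl (mem (S :\: A))); last by move=> x; rewrite !inE andbC.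
  rewrite sum_nat_const cardsD (setIidPr (sub _ AF)).
  have pr : A \proper S by rewrite properEneq (sub _ AF) andbT; apply: contraNneq SF => <-.
  have := proper_card pr => lt.
  have -> : #|S| - #|A| = (#|S|.-1 - #|A|).+1 by lia.
  rewrite factS /h; set m := (_ - _)%N; lia.
rewrite (eq_bigr _ step) exchange_big /=.
apply: (@leq_trans (\sum_(x in S) #|S|.-1`!)).
  apply: leq_sum => x xS; rewrite -big_mkcondr.
  have cS : #|S :\ x| = #|S|.-1 by rewrite (cardsD1 x S) xS.
  rewrite (eq_bigl (mem [set A in F | x \notin A])); last by move=> A; rewrite !inE.
  rewrite /h -cS; apply: IH.
  - by move: leN; rewrite (cardsD1 x S) xS; lia.
  - by move=> A; rewrite inE subsetD1 => /andP[/sub -> ->].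
  - by move=> A B; rewrite !inE => /andP[AF _] /andP[BF _]; exact: anti.
rewrite sum_nat_const; case: #|S| => // m; by rewrite factS.
Qed.

Lemma fact_mid n m : m <= n -> n./2`! * (n - n./2)`! <= m`! * (n - m)`!.
Proof.
have key k : k < n./2 -> k.+1`! * (n - k.+1)`! <= k`! * (n - k)`!.
  move=> lt; have -> : n - k = (n - k.+1).+1 by lia.
  rewrite !factS; set a := k`!; set b := (n - k.+1)`!.
  have : k.+1 <= (n - k.+1).+1 by lia.
  move=> H; rewrite -mulnA. rewrite [X in _ <= X]mulnCA. exact: leq_mul H (leqnn _).
have low k : k <= n./2 -> n./2`! * (n - n./2)`! <= k`! * (n - k)`!.
  move=> le; move: {2}(n./2 - k) (erefl (n./2 - k)) => d.
  elim: d k le => [|d IHd] k le e.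
    by have -> : k = n./2 by lia.
  apply: leq_trans (IHd k.+1 _ _) (key k _); lia.
move=> le; case: (leqP m n./2) => H; first exact: low.
have := low (n - m) ltac:(lia); have -> : n - (n - m) = m by lia.
by rewrite [(n - m)`! * _]mulnC.
Qed.

Section Trop.
Variable R : realType.

Lemma tadd_assoc : associative (@tadd R).
Proof. by case=> [x|] [y|] [z|] //=; rewrite maxA. Qed.
Lemma tadd_comm : commutative (@tadd R).
Proof. by case=> [x|] [y|] //=; rewrite maxC. Qed.
Lemma tadd_left_id : left_id None (@tadd R).
Proof. by case. Qed.

HB.instance Definition _ := Monoid.isComLaw.Build (Rmax R) None (@tadd R)
  tadd_assoc tadd_comm tadd_left_id.

Lemma tle_trans (x y z : Rmax R) : tle x y -> tle y z -> tle x z.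
Proof. by case: x => [x|]; case: y => [y|]; case: z => [z|] //=; apply: le_trans. Qed.

Lemma tle_addr (x y : Rmax R) : tle x (tadd x y).
Proof. by case: x => [x|]; case: y => [y|] //=; rewrite le_max lexx. Qed.

Variable n : nat.
Variable a : 'I_n -> R.

Lemma tsum_mono (K I : {set 'I_n}) x : K \subset I -> tle (tsum a K x) (tsum a I x).
Proof.
move=> KI; rewrite /tsum [X in tle _ X](bigID (mem K)) /=.
rewrite [X in tle _ (tadd X _)](eq_bigl (mem K)); first exact: tle_addr.
by move=> i /=; apply/andP/idP => [[]//|iK]; split=> //; exact: (subsetP KI).
Qed.

Lemma tsum_none (I : {set 'I_n}) x : (forall i, i \in I -> x i = None) -> tsum a I x = None.
Proof. by move=> H; rewrite /tsum big1 // => i /H ->. Qed.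

Lemma tsum_some (I : {set 'I_n}) x k : k \in I -> x k <> None -> tsum a I x <> None.
Proof.
move=> kI; rewrite /tsum (bigD1 k) //=; case: (x k) => // u _.
by case: (\big[_/_]_(_ | _) _).
Qed.

Lemma half_easy (I K : {set 'I_n}) : K \subset I -> subset_of (halfspace a I) (halfspace a K).
Proof.
move=> KI x; rewrite /halfspace => H.
apply: tle_trans (tsum_mono x KI) _; apply: tle_trans H _.
by apply: tsum_mono; rewrite setCS.
Qed.

Lemma half_hard (I K : {set 'I_n}) : subset_of (halfspace a I) (halfspace a K) -> K \subset I.
Proof.
move=> H; apply/subsetP => k kK; apply/negPn/negP => kI.
pose x := fun i : 'I_n => if i == k then Some (0%R : R) else None.
have xI : halfspace a I x.
  rewrite /halfspace (tsum_none (I := I)) // => i iI; rewrite /x.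
  by case: eqP => // e; move: iI; rewrite e (negbTE kI).
have := H x xI; rewrite /halfspace (tsum_none (I := ~: K)); last first.
  by move=> i; rewrite inE /x; case: eqP => // ->; rewrite kK.
have := tsum_some (x := x) kK; rewrite /x eqxx => /(_ ltac:(by [])).
by case: (tsum a K _).
Qed.

End Trop.

Theorem lemma4p7 (R : realType) (n : nat) (a : 'I_n -> R) :
  (forall (k : nat) (Is : 'I_k -> {set 'I_n}),
      (forall i j : 'I_k, i != j ->
         ~ subset_of (halfspace a (Is i)) (halfspace a (Is j))) ->
      (k <= 'C(n, n./2))%N)
  /\
  (exists Is : 'I_('C(n, n./2)) -> {set 'I_n},
      forall i j : 'I_('C(n, n./2)), i != j ->
        ~ subset_of (halfspace a (Is i)) (halfspace a (Is j))).
Proof.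
split.
  move=> k Is H.
  have inj : injective Is.
    move=> i j e; apply/eqP; apply/negPn/negP => /H; apply.
    by rewrite e; apply: half_easy.
  pose F := Is @: [set: 'I_k].
  have cF : #|F| = k by rewrite card_imset // cardsT card_ord.
  have lym' := @lym _ [set: 'I_n] F (fun A _ => subsetT A).
  have anti : forall A B, A \in F -> B \in F -> A \subset B -> A = B.
    move=> A B /imsetP[i _ ->] /imsetP[j _ ->] sub.
    case: (eqVneq j i) => [->//|/H ij]; exfalso; apply: ij.
    exact: half_easy.
  have := lym' anti; rewrite cardsT card_ord => L.
  set h := (n./2)`! * (n - n./2)`!.
  have hpos : 0 < h by rewrite muln_gt0 !fact_gt0.
  have hl : n./2 <= n by lia.
  rewrite -(leq_pmul2r hpos) /h (bin_fact hl) -cF -sum_nat_const.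
  apply: leq_trans L; apply: leq_sum => A _; apply: fact_mid.
  by have := max_card A; rewrite card_ord.
pose D := [set A : {set 'I_n} | #|A| == n./2].
have cD : #|D| = 'C(n, n./2) by rewrite card_draws card_ord.
exists (fun i => enum_val (cast_ord (esym cD) i)).
move=> i j ij sub; have := half_hard sub.
have := enum_valP (cast_ord (esym cD) i); have := enum_valP (cast_ord (esym cD) j).
rewrite !inE => /eqP cj /eqP ci s.
have e : enum_val (cast_ord (esym cD) j) = enum_val (cast_ord (esym cD) i).
  by apply/eqP; rewrite eqEcard s /= ci cj.
move/enum_val_inj/cast_ord_inj: e => e; by rewrite e eqxx in ij.
Qed.
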